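(* Let $m\ge4$. Let $A$ be the $m\times m$ coloring matrix whose rows $1$ and $2$ are zero, whose rows $3,4,\dots,m-1$ each have a single $1$ in column $2$ and zeros elsewhere, and whose row $m$ has ones in columns $1$ and $2$ and zeros elsewhere. Let $B$ be the $m\times m$ coloring matrix whose row $1$ is zero, whose rows $2$ and $3$ each have a single $1$ in column $m$ and zeros elsewhere, and whose rows $4,\dots,m$ each have a single $1$ in column $1$ and zeros elsewhere. Then for all $n\ge2$, $t_A(n)=t_B(n)=2^{n-1}+m-3$ (and $t_A(1)=t_B(1)=m$). However, $A$ and $B$ are not strongly tree coloring equivalent.
   Context: A plane tree is an unlabeled rooted tree in which the children of every vertex are linearly ordered. A coloring matrix is an $m\times m$ matrix $A=(a_{ij})$ with entries in $\{0,1\}$. An $A$-coloring of a plane tree assigns to each vertex a color in $\{1,\dots,m\}$ such that whenever a vertex of color $j$ is a child of a vertex of color $i$, $a_{ij}=1$. Let $t_A(n)$ be the number of pairs (plane tree with $n$ vertices, $A$-coloring of it) and $t_A^{(i)}(n)$ the number of those with root color $i$. Two $m\times m$ coloring matrices $A,B$ are strictly tree coloring equivalent if $t_A^{(i)}(n)=t_B^{(i)}(n)$ for all $n\ge1$ and all $i$; they are strongly tree coloring equivalent if there is an $m\times m$ permutation matrix $P$ such that $P^TAP$ and $B$ are strictly tree coloring equivalent. *)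

(* Defs.v *)
From HB Require Import structures.
From mathcomp Require Import all_boot all_order all_algebra all_fingroup.
Set Implicit Arguments. Unset Strict Implicit. Unset Printing Implicit Defensive.
Import GRing.Theory.
Local Open Scope ring_scope.

(* Colors are 'I_m (color k+1 of the paper is the ordinal k).
   A pair (plane tree, coloring of its vertices) is the same thing as a plane
   tree whose vertices carry a label in 'I_m: a vertex with its ordered list of
   children subtrees. *)
Inductive ctree (m : nat) : Type :=
  CNode : 'I_m -> seq (ctree m) -> ctree m.

Definition root_color m (t : ctree m) : 'I_m := let: CNode c _ := t in c.

Fixpoint nverts m (t : ctree m) : nat :=
  let: CNode _ ts := t in (sumn (map (@nverts m) ts)).+1.

Definition coloring_matrix m (A : 'M[nat]_m) : Prop :=
  forall i j, A i j = 0%N \/ A i j = 1%N.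

Fixpoint is_Acoloring m (A : 'M[nat]_m) (t : ctree m) : bool :=
  let: CNode c ts := t in
  all (fun s => (A c (root_color s) == 1%N) && is_Acoloring A s) ts.

Definition has_card (T : Type) (P : T -> Prop) (k : nat) : Prop :=
  exists f : 'I_k -> T, injective f /\ (forall x, P x <-> exists j, f j = x).

Definition tA_is m (A : 'M[nat]_m) (n k : nat) : Prop :=
  has_card (fun t : ctree m => is_Acoloring A t /\ nverts t = n) k.

Definition tAi_is m (A : 'M[nat]_m) (i : 'I_m) (n k : nat) : Prop :=
  has_card (fun t : ctree m =>
    is_Acoloring A t /\ root_color t = i /\ nverts t = n) k.

Definition strictly_tc_equiv m (A B : 'M[nat]_m) : Prop :=
  forall (n : nat) (i : 'I_m) (k : nat), (1 <= n)%N ->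
    (tAi_is A i n k <-> tAi_is B i n k).

Definition strongly_tc_equiv m (A B : 'M[nat]_m) : Prop :=
  exists P : 'M[nat]_m, is_perm_mx P /\ strictly_tc_equiv (P^T *m A *m P) B.

(* The matrices of the theorem (0-indexed). *)
Definition matA m : 'M[nat]_m :=
  \matrix_(i < m, j < m)
    (if (2 <= i <= m - 2)%N then (nat_of_ord j == 1%N : nat)
     else if nat_of_ord i == (m - 1)%N then ((j <= 1)%N : nat) else 0%N).

Definition matB m : 'M[nat]_m :=
  \matrix_(i < m, j < m)
    (if (1 <= i <= 2)%N then (nat_of_ord j == (m - 1)%N : nat)
     else if (3 <= i)%N then (nat_of_ord j == 0%N : nat) else 0%N).

(* Main.v *)
Require Import Defs.
From mathcomp Require Import all_boot all_order all_algebra all_fingroup.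
From Stdlib Require List.
From HB Require Import structures.
From mathcomp Require Import zify.
Set Implicit Arguments. Unset Strict Implicit. Unset Printing Implicit Defensive.

Section Tree.
Variable m : nat.

Lemma ctree_ind' (P : ctree m -> Prop) :
  (forall c ts, (forall s, List.In s ts -> P s) -> P (CNode c ts)) -> forall t, P t.
Proof.
move=> H. fix IH 1. intros [c ts]. apply: H.
elim: ts => [|s ts IHts] /= x; first move=> [] .
case=> [<-|Hx]; first exact: IH.
exact: IHts.
Qed.

Fixpoint enc (t : ctree m) : GenTree.tree 'I_m :=
  let: CNode c ts := t in GenTree.Node 0 (GenTree.Leaf c :: map enc ts).

Fixpoint dec (g : GenTree.tree 'I_m) : option (ctree m) :=
  match g with
  | GenTree.Node _ (GenTree.Leaf c :: l) => Some (CNode c (pmap dec l))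
  | _ => None
  end.

Lemma encK : pcancel enc dec.
Proof.
elim/ctree_ind' => c ts IH /=; congr (Some (CNode c _)).
elim: ts IH => [|s ts IHts] IH //=.
rewrite IH /=; last by left.
by rewrite IHts // => x hx; apply: IH; right.
Qed.

HB.instance Definition _ := Countable.copy (ctree m) (pcan_type encK).

Definition leaf (c : 'I_m) := CNode c [::].

Lemma has_card_list (T : eqType) (P : T -> Prop) (s : seq T) :
  uniq s -> (forall x, P x <-> x \in s) -> has_card P (size s).
Proof.
move=> us Hs; exists (tnth (in_tuple s)); split.
  by apply/tuple_uniqP.
move=> x; rewrite Hs; split.
  by move/(tnthP (in_tuple s)) => [i ->]; exists i.
by case=> i <-; apply/(tnthP (in_tuple s)); exists i.
Qed.

Lemma zero_row (M : 'M[nat]_m) c ts :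
  (forall j, M c j != 1) -> is_Acoloring M (CNode c ts) -> ts = [::].
Proof. by move=> H; case: ts => //= s ts; rewrite (negbTE (H _)). Qed.

Lemma single_col (M : 'M[nat]_m) c d ts :
  (forall j, M c j == 1 -> j = d) -> (forall j, M d j != 1) ->
  is_Acoloring M (CNode c ts) -> ts = nseq (size ts) (leaf d).
Proof.
move=> H1 H2; elim: ts => //= s ts IH /andP[/andP[h1 h2] h3].
rewrite -IH //; congr (_ :: _).
case: s h1 h2 => c' ts' /= h1 h2; have e := H1 _ h1; subst c'.
by rewrite /leaf (zero_row H2 h2).
Qed.

Lemma col_nseq (M : 'M[nat]_m) c d k :
  M c d == 1 -> is_Acoloring M (CNode c (nseq k (leaf d))).
Proof. by move=> h; rewrite /= all_nseq /= h orbT. Qed.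

Lemma nverts_nseq c d k : nverts (CNode c (nseq k (leaf d))) = k.+1.
Proof. by rewrite /= map_nseq sumn_nseq mul1n. Qed.

Lemma nverts_pos (t : ctree m) : 0 < nverts t.
Proof. by case: t. Qed.

Lemma nverts1 (t : ctree m) : nverts t = 1 -> t = leaf (root_color t).
Proof.
case: t => c [|s ts] //= [].
by have := nverts_pos s; case: (nverts s).
Qed.

Lemma has_card1 (M : 'M[nat]_m) : tA_is M 1 m.
Proof.
rewrite /tA_is -[X in has_card _ X]size_enum_ord.
rewrite -(size_map leaf); apply: has_card_list.
  by rewrite map_inj_uniq ?enum_uniq // => a b [].
move=> t; split.
  case=> _ /nverts1 ->; apply: map_f; exact: mem_enum.
by case/mapP => c _ ->.
Qed.

End Tree.


Definition inc_head (c : seq nat) := if c is k :: c' then k.+1 :: c' else [::].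
Fixpoint cps N : seq (seq nat) :=
  if N is N'.+1 then [seq 0 :: c | c <- cps N'] ++
                     [seq inc_head c | c <- cps N' & c != [::]]
  else [:: [::]].
Definition szc (c : seq nat) := sumn (map S c).

Lemma mem_cps N c : (c \in cps N) = (szc c == N).
Proof.
elim: N c => [|N IH] c.
  by case: c => [|x c] //=; rewrite inE.
rewrite /= mem_cat; case: c => [|[|x] c].
- apply/negbTE; rewrite negb_or; apply/andP; split; apply/mapP.
    by move=> [].
  by move=> [[|a b]] //; rewrite mem_filter.
- rewrite (mem_map (fun a b => _)) ?IH; last by move=> a b [].
  suff -> : (0 :: c \in [seq inc_head c | c <- cps N & c != [::]]) = false.
    by rewrite orbF /szc /=; lia.
  by apply/negbTE/mapP => -[[|a b]].
- have -> : (x.+1 :: c \in [seq 0 :: c | c <- cps N]) = false.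
    by apply/negbTE/mapP => -[].
  rewrite /=; have -> : (szc (x.+1 :: c) == N.+1) = (szc (x :: c) == N).
    by rewrite /szc /=; lia.
  rewrite -IH; apply/mapP/idP.
    by case=> -[|a b] //; rewrite mem_filter => /andP[_ h] [-> ->].
  by move=> h; exists (x :: c); rewrite // mem_filter.
Qed.

Lemma uniq_cps N : uniq (cps N).
Proof.
elim: N => [|N IH] //=; rewrite cat_uniq map_inj_uniq // ?IH /=; last first.
  by move=> a b [].
apply/andP; split.
  apply/hasPn => y /mapP [[|a b]]; rewrite mem_filter => /andP[h _] ->.
    by rewrite eqxx in h.
  by apply/negP => /mapP [x _ e]; discriminate e.
rewrite (@map_inj_in_uniq _ _ inc_head) ?filter_uniq //.
move=> x y; rewrite !mem_filter => /andP[h _] /andP[h' _].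
case: x h => [|a b] h; first by rewrite eqxx in h.
case: y h' => [|a' b'] h'; first by rewrite eqxx in h'.
by case=> -> ->.
Qed.

Lemma cps_S N : cps N.+1 = [seq 0 :: c | c <- cps N] ++
                     [seq inc_head c | c <- cps N & c != [::]].
Proof. by []. Qed.

Lemma size_cps N : size (cps N.+1) = 2 ^ N.
Proof.
elim: N => [|N IH] //.
rewrite cps_S size_cat !size_map.
rewrite (@eq_in_filter _ _ predT) ?filter_predT ?IH ?expnS; first lia.
by move=> c; rewrite mem_cps; case: c.
Qed.


Section Main.
Variable m' : nat.
Local Notation m := m'.+4.

Lemma natb1 (b : bool) : ((b : nat) == 1) = b.
Proof. by case: b. Qed.

Lemma matAE (i j : 'I_m) : (matA m i j == 1) =
  ((2 <= i <= m'.+2) && (j == 1 :> nat)) || ((i == m'.+3 :> nat) && (j <= 1)).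
Proof.
have e2 : (m'.+4 - 2 = m'.+2)%N by rewrite !subSS subn0.
have e1 : (m'.+4 - 1 = m'.+3)%N by rewrite !subSS subn0.
rewrite mxE e1 e2.
case: ifP => h1.
  by move/andP: (h1) => [_ h]; rewrite (@ltn_eqF i m'.+3 h) natb1 /= orbF.
by rewrite /=; case: ifP => h2; rewrite ?natb1.
Qed.

Lemma matBE (i j : 'I_m) : (matB m i j == 1) =
  ((1 <= i <= 2) && (j == m'.+3 :> nat)) || ((3 <= i) && (j == 0 :> nat)).
Proof.
have e1 : (m'.+4 - 1 = m'.+3)%N by rewrite !subSS subn0.
rewrite mxE e1.
case: ifP => h1.
  by rewrite natb1; move: h1 => /andP[_ h]; rewrite leqNgt ltnS h /= orbF.
by rewrite /=; case: ifP => h2; rewrite ?natb1.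
Qed.

Lemma col_mat_A : coloring_matrix (matA m).
Proof.
move=> i j; rewrite mxE; case: ifP => _; first by case: (_ == _); auto.
by case: ifP => _; auto; case: (_ <= _); auto.
Qed.

Lemma col_mat_B : coloring_matrix (matB m).
Proof.
move=> i j; rewrite mxE; case: ifP => _; first by case: (_ == _); auto.
by case: ifP => _; auto; case: (_ == _); auto.
Qed.

Definition o0 : 'I_m := ord0.
Definition o1 : 'I_m := inord 1.
Definition o2 : 'I_m := inord 2.
Definition omax : 'I_m := ord_max.
Lemma v0 : (o0 : nat) = 0. Proof. by []. Qed.
Lemma v1 : (o1 : nat) = 1. Proof. by rewrite /o1 inordK. Qed.
Lemma v2 : (o2 : nat) = 2. Proof. by rewrite /o2 inordK. Qed.
Lemma vmax : (omax : nat) = m'.+3. Proof. by []. Qed.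

Lemma uniq_cat_root (s1 s2 : seq (ctree m)) : uniq s1 -> uniq s2 ->
  (forall t1 t2, t1 \in s1 -> t2 \in s2 -> root_color t1 != root_color t2) ->
  uniq (s1 ++ s2).
Proof.
rewrite cat_uniq => -> -> H /=; rewrite andbT; apply/hasPn => t2 h2.
by apply/negP => h1; have := H _ _ h1 h2; rewrite eqxx.
Qed.

Lemma uniq_inord a b : a + b <= m -> uniq [seq (inord i : 'I_m) | i <- iota a b] = true.
Proof.
move=> ab; rewrite map_inj_in_uniq ?iota_uniq // => x y hx hy /(f_equal (@nat_of_ord _)).
move: hx hy; rewrite !mem_iota => hx hy; rewrite !inordK //; lia.
Qed.

Definition leafb (b : bool) : ctree m := leaf (if b then o1 else o0).
Definition LA k := [seq CNode c (nseq k (leaf o1)) | c <- [seq (inord i : 'I_m) | i <- iota 2 m'.+1]]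
  ++ [seq CNode omax (map leafb (tval w)) | w <- enum {: k.-tuple bool}].

Lemma nverts_leaves c (w : seq bool) : nverts (CNode c (map leafb w)) = (size w).+1.
Proof. by elim: w => //= b w [->]. Qed.

Lemma leafb_inj : injective leafb.
Proof.
by move=> [] [] // e; have := f_equal (fun t => val (root_color t)) e; rewrite /= v1.
Qed.

Lemma LA_spec k t : 0 < k ->
  (is_Acoloring (matA m) t /\ nverts t = k.+1) <-> t \in LA k.
Proof.
move=> k0; split.
- case: t => c ts [col nv]; rewrite mem_cat.
  have [c1|c2] := leqP c 1.
    have e := zero_row (fun j => _) col.
    rewrite e /= in nv; first by case: k k0 nv.
    move=> j; rewrite matAE; apply/negP. clear e col. lia.
  case: (leqP c m'.+2) => c3.
    have e : ts = nseq (size ts) (leaf o1).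
      apply: single_col col.
        by move=> j; rewrite matAE => h; apply: ord_inj; rewrite v1; lia.
      by move=> j; rewrite matAE v1.
    rewrite e nverts_nseq in nv; case: nv => nv.
    apply/orP; left; apply/mapP; exists c.
      apply/mapP; exists (nat_of_ord c); last by rewrite inord_val.
      by rewrite mem_iota; lia.
    by rewrite e nv.
  have hc : c = omax by apply: ord_inj; rewrite vmax; have := ltn_ord c; lia.
  have E : ts = map leafb [seq root_color s == o1 | s <- ts].
    elim: ts {nv} col => //= s ts IH /andP[/andP[h1 h2] h3]; rewrite -IH //.
    congr (_ :: _).
    have rs : root_color s <= 1 by move: h1; rewrite matAE hc vmax; lia.
    case: s h1 h2 rs => d ts' /= h1 h2 rs.
    rewrite (zero_row (fun j => _) h2); last first.
      by move=> j; rewrite matAE; apply/negP; lia.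
    rewrite /leafb /leaf; case: eqP => [-> //|ne]; congr CNode.
    have : (d : nat) != 1 by apply/eqP => h; apply: ne; apply: ord_inj; rewrite v1.
    by move=> hd; apply: ord_inj; rewrite v0; lia.
  rewrite E nverts_leaves size_map in nv; case: nv => nv.
  have sz : size [seq root_color s == o1 | s <- ts] == k by rewrite size_map nv.
  apply/orP; right; apply/mapP; exists (Tuple sz); first by rewrite mem_enum.
  by rewrite hc {1}E.
- rewrite mem_cat => /orP[] /mapP [x hx ->].
    case/mapP: hx => i; rewrite mem_iota => hi ->.
    split; last exact: nverts_nseq.
    by apply: col_nseq; rewrite matAE /o1 !inordK /=; lia.
  split; last by rewrite nverts_leaves size_tuple.
  rewrite /= all_map; apply/allP => b _ /=; rewrite andbT matAE vmax eqxx.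
  by case: b; rewrite /= ?v1 ?v0 orbT.
Qed.

Lemma uniq_LA k : uniq (LA k).
Proof.
apply: uniq_cat_root.
- by rewrite map_inj_uniq ?uniq_inord // => a b [].
- by rewrite map_inj_uniq ?enum_uniq // => a b [] /(inj_map leafb_inj) /val_inj.
- move=> t1 t2 /mapP [c /mapP [i hi ->] ->] /mapP [w _ ->] /=.
  rewrite mem_iota in hi; apply/eqP => /(f_equal (@nat_of_ord _)); rewrite inordK /omax /=; lia.
Qed.

Lemma size_LA k : size (LA k) = m'.+1 + 2 ^ k.
Proof.
by rewrite size_cat !size_map size_iota -enumT -cardE card_tuple card_bool.
Qed.

Definition star j : ctree m := CNode omax (nseq j (leaf o0)).
Definition LB k :=
  [seq CNode c (nseq k (leaf o0)) | c <- [seq (inord i : 'I_m) | i <- iota 3 m'.+1]]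
  ++ ([seq CNode o1 (map star cc) | cc <- cps k]
  ++ [seq CNode o2 (map star cc) | cc <- cps k]).

Lemma nverts_stars c cc : nverts (CNode c (map star cc)) = (szc cc).+1.
Proof.
rewrite /= /szc; congr S; elim: cc => [|j cc IH] //.
transitivity (nverts (star j) + sumn (map (@nverts _) (map star cc))) => //.
by rewrite IH /star nverts_nseq.
Qed.

Lemma star_inj : injective star.
Proof.
move=> a b [] /(f_equal size); by rewrite !size_nseq.
Qed.

Lemma Bmax0 : matB m omax o0 == 1.
Proof. by rewrite matBE /omax /=. Qed.

Lemma Brow0 j : matB m o0 j != 1.
Proof. by rewrite matBE /o0 /=. Qed.

Lemma col_star j : is_Acoloring (matB m) (star j).
Proof. by apply: col_nseq; exact: Bmax0. Qed.

Lemma col_stars c cc : matB m c omax == 1 -> is_Acoloring (matB m) (CNode c (map star cc)).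
Proof.
move=> h; rewrite /= all_map; apply/allP => j _.
by apply/andP; split; [exact: h | exact: col_star].
Qed.

Lemma LB_spec k t : 0 < k ->
  (is_Acoloring (matB m) t /\ nverts t = k.+1) <-> t \in LB k.
Proof.
move=> k0; split.
- case: t => c ts [col nv]; rewrite !mem_cat.
  have [c1|c2] := leqP c 0.
    have e := zero_row (fun j => _) col.
    rewrite e /= in nv; first by case: k k0 nv.
    by move=> j; rewrite matBE; apply/negP; lia.
  case: (leqP c 2) => c3.
    have E : ts = map star [seq (nverts s).-1 | s <- ts].
      elim: ts {nv} col => //= s ts IH /andP[/andP[h1 h2] h3]; rewrite -IH //.
      congr (_ :: _).
      have rs : root_color s = omax.
        by apply: ord_inj; move: h1; rewrite matBE /omax /=; have := ltn_ord c; lia.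
      case: s h1 h2 rs => d ts' /= h1 h2 rs; subst d.
      have e : ts' = nseq (size ts') (leaf o0).
        apply: single_col h2; last exact: Brow0.
        by move=> j; rewrite matBE /omax /= => h; apply: ord_inj; rewrite /o0 /=; lia.
      by rewrite e /star map_nseq sumn_nseq mul1n.
    rewrite E nverts_stars in nv; case: nv => nv.
    have hm : [seq (nverts s).-1 | s <- ts] \in cps k by rewrite mem_cps nv.
    apply/orP; right; apply/orP.
    have [c01|c02] := eqVneq (nat_of_ord c) 1.
      left; apply/mapP; exists [seq (nverts s).-1 | s <- ts] => //.
      by rewrite {1}E; congr CNode; apply: ord_inj; rewrite c01 /o1 inordK.
    right; apply/mapP; exists [seq (nverts s).-1 | s <- ts] => //.
    by rewrite {1}E; congr CNode; apply: ord_inj; rewrite /o2 inordK //; lia.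
  have e : ts = nseq (size ts) (leaf o0).
    apply: single_col col; last exact: Brow0.
    by move=> j; rewrite matBE => h; apply: ord_inj; rewrite /o0 /=; lia.
  rewrite e nverts_nseq in nv; case: nv => nv.
  apply/orP; left; apply/mapP; exists c.
    apply/mapP; exists (nat_of_ord c); last by rewrite inord_val.
    by rewrite mem_iota; have := ltn_ord c; lia.
  by rewrite e nv.
- rewrite !mem_cat => /orP[|/orP[]] /mapP [x hx ->].
  + case/mapP: hx => i; rewrite mem_iota => hi ->.
    split; last exact: nverts_nseq.
    by apply: col_nseq; rewrite matBE /o0 !inordK /=; lia.
  + split; last by rewrite nverts_stars; rewrite mem_cps in hx; rewrite (eqP hx).
    by apply: col_stars; rewrite matBE /o1 /omax inordK //= eqxx.
  + split; last by rewrite nverts_stars; rewrite mem_cps in hx; rewrite (eqP hx).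
    by apply: col_stars; rewrite matBE /o2 /omax inordK //= eqxx.
Qed.

Lemma uniq_LB k : uniq (LB k).
Proof.
have inj c : injective (fun cc => CNode c (map star cc)).
  by move=> a b [] /(inj_map star_inj).
apply: uniq_cat_root.
- by rewrite map_inj_uniq ?uniq_inord // => a b [].
- apply: uniq_cat_root; rewrite ?map_inj_uniq ?uniq_cps //.
  move=> t1 t2 /mapP [a _ ->] /mapP [b _ ->] /=.
  by apply/eqP => /(f_equal (@nat_of_ord _)); rewrite /o1 /o2 !inordK.
- move=> t1 t2 /mapP [c /mapP [i hi ->] ->]; rewrite mem_iota in hi.
  by rewrite mem_cat => /orP[] /mapP [w _ ->] /=; apply/eqP => /(f_equal (@nat_of_ord _));
    rewrite /o1 /o2 !inordK //; lia.
Qed.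

Lemma size_LB k : size (LB k.+1) = m'.+1 + 2 ^ k.+1.
Proof.
by rewrite !size_cat !size_map size_iota size_cps expnS mul2n -addnn.
Qed.

Lemma nverts2 c (ts : seq (ctree m)) : nverts (CNode c ts) = 2 -> exists d, ts = [:: leaf d].
Proof.
case: ts => [|s [|s' ts]] //=.
  case; rewrite addn0 => h; exists (root_color s); by rewrite (nverts1 h).
by have := nverts_pos s; have := nverts_pos s'; case=> ? ?; lia.
Qed.

Lemma tAi2_le1 (M : 'M[nat]_m) i :
  (forall j j', M i j == 1 -> M i j' == 1 -> j = j') ->
  exists k, k <= 1 /\ tAi_is M i 2 k.
Proof.
move=> H; case: (pickP (fun j => M i j == 1)) => [j hj|none].
- exists 1; split => //; exists (fun _ => CNode i [:: leaf j]); split.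
    by move=> x y _; rewrite (ord1 x) (ord1 y).
  move=> t; split.
    case: t => c ts [col [rc nv]].
    simpl in rc; subst c.
    have [d e] := nverts2 nv.
    subst ts.
    exists ord0; move: col => /= /andP[/andP[h _] _].
    by rewrite (H _ _ hj h).
  by case=> _ <-; split; [rewrite /= hj | split].
- exists 0; split => //; exists (fun _ => CNode i [::]); split.
    by move=> [].
  move=> t; split; last by case=> -[].
  case: t => c ts [col [rc nv]].
    simpl in rc; subst c.
    have [d e] := nverts2 nv.
    subst ts.
  by move: col => /= /andP[/andP[h _] _]; have := none d; rewrite /= h.
Qed.

Lemma not_strong : ~ strongly_tc_equiv (matA m) (matB m).
Proof.
case=> P [/is_perm_mxP [s ->] H].
set C := (_ *m _ *m _)%R in H.
have CE : forall i j, C i j = matA m ((s^-1)%g i) ((s^-1)%g j).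
  move=> i j; rewrite /C tr_perm_mx -row_permE -[s in perm_mx s]invgK -col_permE.
  by rewrite !mxE.
have uB : forall j j', matB m (s omax) j == 1 -> matB m (s omax) j' == 1 -> j = j'.
  move=> j j'; rewrite !matBE => h h'; apply: ord_inj; lia.
have [k [k1 hB]] := tAi2_le1 uB.
  have := (H 2 (s omax) k isT).2 hB.
  case=> g [_ Hg].
  have t1 : is_Acoloring C (CNode (s omax) [:: leaf (s o0)]) /\
     root_color (CNode (s omax) [:: leaf (s o0)]) = s omax /\
     nverts (CNode (s omax) [:: leaf (s o0)]) = 2.
    split; last by split.
    by rewrite /= CE !permK andbT matAE /omax /o0 /= ?eqxx ?orbT.
  have t2 : is_Acoloring C (CNode (s omax) [:: leaf (s o1)]) /\
     root_color (CNode (s omax) [:: leaf (s o1)]) = s omax /\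
     nverts (CNode (s omax) [:: leaf (s o1)]) = 2.
    split; last by split.
    by rewrite /= CE !permK andbT matAE /omax /o1 inordK //= ?eqxx ?orbT.
  have [j1 e1] := (Hg _).1 t1; have [j2 e2] := (Hg _).1 t2.
  have ej : j1 = j2 by apply: ord_inj; have := ltn_ord j1; have := ltn_ord j2; lia.
  subst j2; rewrite e1 in e2; case: e2 => /perm_inj /(f_equal (@nat_of_ord _)).
  by rewrite /o0 /o1 inordK.
Qed.
End Main.

Unset Implicit Arguments.

Theorem theorem37 (m : nat) (hm : (4 <= m)%N) :
  coloring_matrix (matA m) /\ coloring_matrix (matB m) /\
  (forall n : nat, (2 <= n)%N ->
     tA_is (matA m) n (2 ^ (n - 1) + m - 3) /\
     tA_is (matB m) n (2 ^ (n - 1) + m - 3)) /\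
  tA_is (matA m) 1 m /\ tA_is (matB m) 1 m /\
  ~ strongly_tc_equiv (matA m) (matB m).
Proof.
case: m hm => [|[|[|[|m']]]] // _.
split; first exact: col_mat_A.
split; first exact: col_mat_B.
split.
  move=> [|[|k]] // _.
  have -> : (2 ^ (k.+2 - 1) + m'.+4 - 3 = m'.+1 + 2 ^ k.+1)%N.
    by rewrite subn1 /=; lia.
  split.
    rewrite -size_LA /tA_is; apply: has_card_list; first exact: uniq_LA.
    by move=> t; apply: LA_spec.
  rewrite -size_LB /tA_is; apply: has_card_list; first exact: uniq_LB.
  by move=> t; apply: LB_spec.
split; first exact: has_card1.
split; first exact: has_card1.
exact: not_strong.
Qed.
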